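(* Fix an input $x$ with $n=n(x)\ge2$ tokens and a mask $m\in\{0,1\}^{|\mathrm H|}$ with pruning ratio $\rho$, i.e. $\sum_{h=1}^{|\mathrm H|}(1-m_h)=|\mathrm H|\rho$. For each head $h$ and query token $t\in\{1,\dots,n\}$ let $\boldsymbol\alpha^{(h)}_t,\boldsymbol\alpha'^{(h)}_t\in\Delta^{n-1}$ be the attention distributions of the models trained on two neighboring datasets $\mathcal S,\mathcal S'$, and let $V_h\in\mathbb R^{n\times d_v}$ be a common value matrix with $\max_h\|V_h\|_{\infty\to2}\le M$. Set $\Delta_h(t)=(\boldsymbol\alpha^{(h)}_t-\boldsymbol\alpha'^{(h)}_t)^\top V_h$ and $$\|\Delta(x)\|_2:=\frac1n\sum_{t=1}^n\sum_{h=1}^{|\mathrm H|}(1-m_h)\|\Delta_h(t)\|_2.$$ Then $$\|\Delta(x)\|_2\;\le\;M\sqrt{8\log n}\sum_{h=1}^{|\mathrm H|}(1-m_h)\sqrt{\overline{\mathrm{AD}}_h(x)}\;\le\;\sqrt8\,M\sqrt{|\mathrm H|\rho\log n}\;\sqrt{\sum_{h=1}^{|\mathrm H|}(1-m_h)\,\overline{\mathrm{AD}}_h(x)}.$$ Moreover, if all inputs have the same length $n$, then for any distribution over $x$, $$\mathbb E\bigl[\|\Delta(x)\|_2\bigr]\le\sqrt8\,M\sqrt{|\mathrm H|\rho\log n}\;\sqrt{\sum_{h=1}^{|\mathrm H|}(1-m_h)\,\mathbb E\bigl[\overline{\mathrm{AD}}_h(x)\bigr]}.$$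
   Context: $\Delta^{n-1}$ is the probability simplex; $H(\mathbf p)=-\sum_jp_j\log p_j$. $\|V\|_{\infty\to2}:=\max_j\|V(j,:)\|_2$ (maximum row Euclidean norm). Neighboring datasets differ in exactly one example. Token-averaged, length-normalized attention deficits: $\mathrm{AD}_h(x)=\frac{1}{n\log n}\sum_{t=1}^n\bigl(\log n-H(\boldsymbol\alpha^{(h)}_t)\bigr)\in[0,1]$, $\mathrm{AD}'_h(x)$ defined likewise with $\boldsymbol\alpha'^{(h)}_t$, and $\overline{\mathrm{AD}}_h(x)=\tfrac12(\mathrm{AD}_h(x)+\mathrm{AD}'_h(x))$. Equivalently $\mathrm{AD}_h=1-\mathrm{AE}_h$ with $\mathrm{AE}_h(x)=\frac{1}{n\log n}\sum_tH(\boldsymbol\alpha^{(h)}_t)$. *)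

(* Defs.v *)
From HB Require Import structures.
From mathcomp Require Import all_boot all_order all_algebra.
From mathcomp Require Import all_classical all_reals all_analysis.
Set Implicit Arguments. Unset Strict Implicit. Unset Printing Implicit Defensive.
Import Order.TTheory GRing.Theory Num.Theory.
Local Open Scope ring_scope.

Section Defs.
Context {R : realType}.

Definition is_dist (n : nat) (p : 'I_n -> R) : Prop :=
  (forall j, 0 <= p j) /\ \sum_j p j = 1.

(* Shannon entropy H(p) = - sum_j p_j log p_j (natural log; ln 0 = 0 in
   mathcomp-analysis, so 0 log 0 = 0) *)
Definition entropy (n : nat) (p : 'I_n -> R) : R := - \sum_j p j * ln (p j).

Definition l2norm (k : nat) (v : 'rV[R]_k) : R := Num.sqrt (\sum_i v 0 i ^+ 2).

Definition inf2norm (n d : nat) (V : 'M[R]_(n, d)) : R :=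
  \big[Num.max/0]_(j < n) l2norm (row j V).

(* token-averaged, length-normalised attention deficit;
   alpha t = attention distribution of query token t *)
Definition AD (n : nat) (alpha : 'I_n -> 'I_n -> R) : R :=
  (n%:R * ln n%:R)^-1 * \sum_(t < n) (ln n%:R - entropy (alpha t)).

Definition ADbar (n : nat) (alpha alpha' : 'I_n -> 'I_n -> R) : R :=
  (AD alpha + AD alpha') / 2.

Definition Delta_ht (n d : nat) (alpha alpha' : 'I_n -> 'I_n -> R)
  (V : 'M[R]_(n, d)) (t : 'I_n) : 'rV[R]_d :=
  (\row_j (alpha t j - alpha' t j)) *m V.

(* pruned-head indicator 1 - m_h, with m_h = true meaning the head is kept *)
Definition pruned (H : nat) (m : 'I_H -> bool) (h : 'I_H) : R := 1 - (m h : nat)%:R.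

Definition DeltaNorm (H n d : nat) (m : 'I_H -> bool)
  (alpha alpha' : 'I_H -> 'I_n -> 'I_n -> R) (V : 'I_H -> 'M[R]_(n, d)) : R :=
  n%:R^-1 * \sum_(t < n) \sum_(h < H) pruned m h * l2norm (Delta_ht (alpha h) (alpha' h) (V h) t).

End Defs.

(* Main.v *)
Require Import Defs.
From HB Require Import structures.
From mathcomp Require Import all_boot all_order all_algebra.
From mathcomp Require Import all_classical all_reals all_analysis.
Import Order.TTheory GRing.Theory Num.Theory.
Local Open Scope ring_scope.
Local Open Scope classical_set_scope.
From mathcomp Require Import ring lra measurable_realfun.

Set Implicit Arguments. Unset Strict Implicit. Unset Printing Implicit Defensive.

Section S1.
Context {R : realType}.

Lemma scE (a b : R) : a *: b = a * b. Proof. by []. Qed.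

Lemma incr_on (a b : R) (f df : R -> R) : a <= b ->
  (forall y, a <= y <= b -> is_derive y 1 f (df y)) ->
  (forall y, a < y < b -> 0 <= df y) -> f a <= f b.
Proof.
move=> ab hd hp.
have cf := @derivable_within_continuous R R f `[a, b]%R.
have /cf {}cf : {in `[a, b]%R, forall x, derivable f x 1}.
  move=> y; rewrite in_itv /= => hy.
  by have [] := hd y hy.
apply: (@ger0_derive1_le_cc R f a b) => //.
- move=> y; rewrite in_itv /= => /andP[h1 h2].
  by have [] := hd y (ltac:(by rewrite !ltW)).
- move=> y; rewrite in_itv /= => /andP[h1 h2].
  rewrite derive1E.
  have /(_ _) H := hd y. rewrite (@derive_val _ _ _ _ _ _ _ (H _)); last by rewrite !ltW.
  by apply: hp; rewrite h1 h2.
- by rewrite in_itv /= lexx ab.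
- by rewrite in_itv /= lexx ab.
Qed.

Lemma decr_on (a b : R) (f df : R -> R) : a <= b ->
  (forall y, a <= y <= b -> is_derive y 1 f (df y)) ->
  (forall y, a < y < b -> df y <= 0) -> f b <= f a.
Proof.
move=> ab hd hp.
have cf := @derivable_within_continuous R R f `[a, b]%R.
have /cf {}cf : {in `[a, b]%R, forall x, derivable f x 1}.
  move=> y; rewrite in_itv /= => hy.
  by have [] := hd y hy.
apply: (@ler0_derive1_le_cc R f a b) => //.
- move=> y; rewrite in_itv /= => /andP[h1 h2].
  by have [] := hd y (ltac:(by rewrite !ltW)).
- move=> y; rewrite in_itv /= => /andP[h1 h2].
  rewrite derive1E.
  have /(_ _) H := hd y. rewrite (@derive_val _ _ _ _ _ _ _ (H _)); last by rewrite !ltW.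
  by apply: hp; rewrite h1 h2.
- by rewrite in_itv /= lexx ab.
- by rewrite in_itv /= lexx ab.
Qed.

Lemma ln_lb (x : R) : 0 < x -> 1 - x^-1 <= ln x.
Proof.
move=> x0.
have h := @le_ln1Dx R (x^-1 - 1).
have : -1 < x^-1 - 1 by rewrite ltrBrDr addNr invr_gt0.
move/h; rewrite addrC subrK lnV ?posrE //; lra.
Qed.

Definition mfun (x : R) : R := (x + 1) * ln x - 2 * (x - 1).

Lemma mfun_der (x:R) : 0 < x -> is_derive x 1 mfun (ln x + (x+1) / x - 2).
Proof.
move=> x0. have := is_derive1_ln x0 => H.
rewrite /mfun. apply: is_derive_eq.
by rewrite !scE; lra.
Qed.

Lemma mfun1 : mfun 1 = 0.
Proof. by rewrite /mfun ln1; ring. Qed.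

Lemma mfun_der_ge0 (x : R) : 0 < x -> 0 <= ln x + (x+1) / x - 2.
Proof.
move=> x0; have := ln_lb x0.
have -> : (x + 1) / x = 1 + x^-1 by rewrite mulrDl divff ?gt_eqF // mul1r.
lra.
Qed.

Lemma mfun_ge0 (x : R) : 1 <= x -> 0 <= mfun x.
Proof.
move=> x1; rewrite -mfun1.
apply: (incr_on x1 (df := fun y => ln y + (y+1) / y - 2)).
  move=> y /andP[y1 _]; apply: mfun_der; lra.
move=> y /andP[y1 _]; apply: mfun_der_ge0; lra.
Qed.

Lemma mfun_le0 (x : R) : 0 < x -> x <= 1 -> mfun x <= 0.
Proof.
move=> x0 x1; rewrite -mfun1.
apply: (incr_on x1 (df := fun y => ln y + (y+1) / y - 2)).
  move=> y /andP[y1 _]; apply: mfun_der; lra.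
move=> y /andP[y1 _]; apply: mfun_der_ge0; lra.
Qed.

Definition kfun (x : R) : R := (2 * x * x + 4 * x) * ln x - (5 * x * x - 4 * x - 1).

Lemma kfun_der (x:R) : 0 < x -> is_derive x 1 kfun (4 * mfun x).
Proof.
move=> x0. have := is_derive1_ln x0 => H.
rewrite /kfun. apply: is_derive_eq.
rewrite !scE /mfun; field; lra.
Qed.

Lemma kfun_ge0 (x : R) : 0 < x -> 0 <= kfun x.
Proof.
move=> x0.
have k1 : kfun 1 = 0 by rewrite /kfun ln1; ring.
rewrite -k1.
case: (lerP 1 x) => x1.
  apply: (incr_on x1 (df := fun y => 4 * mfun y)).
    move=> y /andP[y1 _]; apply: kfun_der; lra.
  move=> y /andP[y1 _]; apply: mulr_ge0 => //; apply: mfun_ge0; lra.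
apply: (decr_on (ltW x1) (df := fun y => 4 * mfun y)).
  move=> y /andP[y1 _]; apply: kfun_der; lra.
move=> y /andP[y1 y2]; rewrite pmulr_rle0 //; apply: mfun_le0; lra.
Qed.

Lemma phi_lb (x : R) : 0 <= x -> 3 * (x - 1) ^+ 2 <= 2 * (x + 2) * (x * ln x - x + 1).
Proof.
rewrite le_eqVlt => /orP[/eqP <-|x0].
  rewrite ln0 //; lra.
have := kfun_ge0 x0; rewrite /kfun => h.
nra.
Qed.

End S1.

Section S2.
Context {R : realType}.

Lemma amgm (u c : R) : 0 < c -> 2 * `|u| <= u ^+ 2 / c + c.
Proof.
move=> c0.
have e : u ^+ 2 / c + c - 2 * `|u| = (`|u| - c) ^+ 2 / c.
  rewrite -[u ^+ 2]real_normK ?num_real //; field; lra.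
rewrite -subr_ge0 e; apply: divr_ge0; [exact: sqr_ge0 | exact: ltW].
Qed.

Lemma amgm_sqrt (A l : R) : 0 <= A -> 0 < l -> Num.sqrt A <= (A / l + l) / 2.
Proof.
move=> A0 l0; have := amgm (Num.sqrt A) l0.
rewrite sqr_sqrtr // ger0_norm ?sqrtr_ge0 //; lra.
Qed.

Lemma amgm_prod (u v l : R) : 0 < l -> 2 * (u * v) <= u ^+ 2 / l + l * v ^+ 2.
Proof.
move=> l0.
have e : u ^+ 2 / l + l * v ^+ 2 - 2 * (u * v) = (u - l * v) ^+ 2 / l.
  by field; lra.
rewrite -subr_ge0 e; apply: divr_ge0; [exact: sqr_ge0 | exact: ltW].
Qed.

Lemma lam_bound (X c a b : R) : 0 <= c -> 0 <= a -> 0 <= b ->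
  (forall l, 0 < l -> X <= c * ((a / l + b * l) / 2)) -> X <= c * Num.sqrt (a * b).
Proof.
move=> c0 a0 b0 H.
have [ce|cp] := eqVneq c 0.
  by have := H 1 ltr01; rewrite ce !mul0r.
have {cp}cp : 0 < c by rewrite lt_neqAle eq_sym cp c0.
have [ae|ap] := eqVneq a 0.
  rewrite ae mul0r sqrtr0 mulr0 leNgt; apply/negP => X0.
  have lp : 0 < X / (c * b + 1) by apply: divr_gt0 => //; nra.
  have := H _ lp; rewrite ae mul0r add0r.
  have -> : c * (b * (X / (c * b + 1)) / 2) = (c * b) / (c * b + 1) * X / 2 by field; nra.
  have : (c * b) / (c * b + 1) < 1 by rewrite ltr_pdivrMr; nra.
  nra.
have {ap}ap : 0 < a by rewrite lt_neqAle eq_sym ap a0.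
have [be|bp] := eqVneq b 0.
  rewrite be mulr0 sqrtr0 mulr0 leNgt; apply/negP => X0.
  have lp : 0 < (c * a + 1) / X by apply: divr_gt0 => //; nra.
  have := H _ lp; rewrite be mul0r addr0.
  have -> : c * (a / ((c * a + 1) / X) / 2) = (c * a) / (c * a + 1) * X / 2 by field; nra.
  have : (c * a) / (c * a + 1) < 1 by rewrite ltr_pdivrMr; nra.
  nra.
have {bp}bp : 0 < b by rewrite lt_neqAle eq_sym bp b0.
have sa : 0 < Num.sqrt a by rewrite sqrtr_gt0.
have sb : 0 < Num.sqrt b by rewrite sqrtr_gt0.
have lp : 0 < Num.sqrt a / Num.sqrt b by apply: divr_gt0.
have := H _ lp.
rewrite sqrtrM //.
have -> : (a / (Num.sqrt a / Num.sqrt b) + b * (Num.sqrt a / Num.sqrt b)) / 2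
   = Num.sqrt a * Num.sqrt b.
  rewrite -{1}(sqr_sqrtr (ltW ap)) -{2}(sqr_sqrtr (ltW bp)).
  by field; rewrite !gt_eqF.
by [].
Qed.

End S2.

Section S3.
Context {R : realType}.

Definition phi (x : R) := x * ln x - x + 1.

Lemma pt_bound (p N l : R) : 0 <= p -> 0 < N -> 0 < l ->
  `|p - N^-1| <= (3 * l)^-1 * (N^-1 * phi (N * p)) + l/2 * p + l / N.
Proof.
move=> p0 N0 l0.
set x := N * p.
have x0 : 0 <= x by rewrite /x mulr_ge0 // ltW.
have ex : `|p - N^-1| = `|x - 1| / N.
  have -> : x - 1 = N * (p - N^-1) by rewrite /x; field; lra.
  by rewrite normrM gtr0_norm // mulrAC mulfV ?gt_eqF // mul1r.
rewrite ex.
have c0 : 0 < l * (x + 2) by nra.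
have h1 := amgm (x - 1) c0.
have h2 := phi_lb x0.
have h3 : (x - 1) ^+ 2 / (l * (x + 2)) <= 2 * phi x / (3 * l).
  rewrite ler_pdivrMr // .
  have -> : 2 * phi x / (3 * l) * (l * (x + 2)) = 2 * (x + 2) * phi x / 3 by field; lra.
  rewrite /phi; lra.
have h4 : `|x - 1| <= (3 * l)^-1 * phi x + l / 2 * x + l.
  have -> : (3 * l)^-1 * phi x = (2 * phi x / (3 * l)) / 2 by field; lra.
  lra.
rewrite ler_pdivrMr //.
have -> : ((3 * l)^-1 * (N^-1 * phi x) + l / 2 * p + l / N) * N =
          (3 * l)^-1 * phi x + l / 2 * x + l by rewrite /x; field; lra.
exact: h4.
Qed.

Lemma phi_term (p N : R) : 0 <= p -> 0 < N ->
  N^-1 * phi (N * p) = p * ln N + p * ln p - p + N^-1.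
Proof.
move=> p0 N0; rewrite /phi.
have [->|pp] := eqVneq p 0.
  by rewrite !mulr0 !mul0r; field; lra.
have pp' : 0 < p by rewrite lt_neqAle eq_sym pp p0.
rewrite lnM ?posrE //; field; lra.
Qed.

Lemma phi_ge0 (x : R) : 0 <= x -> 0 <= phi x.
Proof.
move=> x0; have := phi_lb x0; rewrite /phi => h.
have : 0 <= 3 * (x - 1) ^+ 2 by rewrite mulr_ge0 // sqr_ge0.
nra.
Qed.

Lemma KL_eq (n : nat) (p : 'I_n -> R) : (0 < n)%N -> is_dist p ->
  ln n%:R - entropy p = \sum_j n%:R^-1 * phi (n%:R * p j).
Proof.
move=> n0 [p0 p1].
have N0 : 0 < n%:R :> R by rewrite ltr0n.
under eq_bigr => j _ do rewrite phi_term //.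
rewrite !big_split /= -!mulr_suml p1 sumr_const card_ord /entropy.
have e : n%:R^-1 *+ n = 1 :> R by rewrite -[LHS]mulr_natl mulfV ?gt_eqF.
rewrite sumrN p1 e; ring.
Qed.

Lemma pinsker_unif (n : nat) (p : 'I_n -> R) : (0 < n)%N -> is_dist p ->
  0 <= ln n%:R - entropy p /\
  forall l, 0 < l -> \sum_j `|p j - n%:R^-1| <= ((2/3 * (ln n%:R - entropy p)) / l + 3 * l) / 2.
Proof.
move=> n0 pd; have N0 : 0 < n%:R :> R by rewrite ltr0n.
have [p0 p1] := pd.
rewrite KL_eq //; split.
  by apply: sumr_ge0 => j _; apply: mulr_ge0; [rewrite invr_ge0 ltW | apply: phi_ge0; rewrite mulr_ge0 // ltW].
move=> l l0.
apply: le_trans.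
  apply: ler_sum => j _; exact: (pt_bound (p0 j) N0 l0).
rewrite !big_split /= -!mulr_sumr p1 sumr_const card_ord.
have e : n%:R^-1 *+ n = 1 :> R by rewrite -[LHS]mulr_natl mulfV ?gt_eqF.
rewrite e le_eqVlt; apply/orP; left; apply/eqP; field; lra.
Qed.
 
End S3.

Section S4.
Context {R : realType}.

Lemma l2norm_ge0 k (v : 'rV[R]_k) : 0 <= l2norm v.
Proof. exact: sqrtr_ge0. Qed.

Lemma l2norm0 k : l2norm (0 : 'rV[R]_k) = 0.
Proof.
rewrite /l2norm (eq_bigr (fun _ => 0)); first by rewrite big1 // sqrtr0.
by move=> i _; rewrite mxE expr0n.
Qed.

Lemma l2normZ k (c : R) (v : 'rV[R]_k) : l2norm (c *: v) = `|c| * l2norm v.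
Proof.
rewrite /l2norm (eq_bigr (fun i => c ^+ 2 * v 0 i ^+ 2)); last first.
  by move=> i _; rewrite mxE exprMn.
by rewrite -mulr_sumr sqrtrM ?sqr_ge0 // sqrtr_sqr.
Qed.

Lemma l2normD k (u v : 'rV[R]_k) : l2norm (u + v) <= l2norm u + l2norm v.
Proof.
rewrite /l2norm.
set A := \sum_i u 0 i ^+ 2; set B := \sum_i v 0 i ^+ 2.
set C := \sum_i u 0 i * v 0 i.
have A0 : 0 <= A by apply: sumr_ge0 => i _; exact: sqr_ge0.
have B0 : 0 <= B by apply: sumr_ge0 => i _; exact: sqr_ge0.
have CS : C <= 1 * Num.sqrt (A * B).
  apply: lam_bound => // l l0.
  rewrite mul1r /A /B /C !mulr_suml -big_split /= mulr_suml.
  apply: ler_sum => i _.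
  have := amgm_prod (u 0 i) (v 0 i) l0; lra.
rewrite mul1r sqrtrM // in CS.
have e : \sum_i (u + v) 0 i ^+ 2 = A + 2 * C + B.
  rewrite /A /B /C mulr_sumr -!big_split /=; apply: eq_bigr => i _.
  rewrite mxE; ring.
rewrite e.
have sA := sqrtr_ge0 A; have sB := sqrtr_ge0 B.
rewrite -(ger0_norm (addr_ge0 sA sB)) -sqrtr_sqr ler_sqrt ?sqr_ge0 //.
have : (Num.sqrt A + Num.sqrt B) ^+ 2 = A + 2 * (Num.sqrt A * Num.sqrt B) + B.
  by rewrite sqrrD !sqr_sqrtr //; ring.
move=> ->; lra.
Qed.

Lemma l2norm_sum k (I : Type) (r : seq I) (c : I -> R) (w : I -> 'rV[R]_k) :
  l2norm (\sum_(i <- r) c i *: w i) <= \sum_(i <- r) `|c i| * l2norm (w i).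
Proof.
apply: (big_ind2 (fun x y => l2norm x <= y)).
- by rewrite l2norm0.
- move=> x1 x2 y1 y2 h1 h2; apply: le_trans (l2normD _ _) _; exact: lerD.
- by move=> i _; rewrite l2normZ.
Qed.

Lemma le_bigmax_seq n (s : seq 'I_n) (F : 'I_n -> R) j :
  j \in s -> F j <= \big[Num.max/0]_(i <- s) F i.
Proof.
elim: s => // a s IH; rewrite inE big_cons => /orP[/eqP->|js].
  by rewrite le_max lexx.
by rewrite le_max (IH js) orbT.
Qed.

Lemma row_le_inf2 n d (V : 'M[R]_(n, d)) j : l2norm (row j V) <= inf2norm V.
Proof. by rewrite /inf2norm; apply: le_bigmax_seq; exact: mem_index_enum. Qed.

Lemma Delta_bound n d (a a' : 'I_n -> 'I_n -> R) (V : 'M[R]_(n, d)) (M : R) t :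
  inf2norm V <= M ->
  l2norm (Delta_ht a a' V t) <= M * \sum_j `|a t j - a' t j|.
Proof.
move=> VM; rewrite /Delta_ht mulmx_sum_row.
apply: le_trans (l2norm_sum _ _ _) _.
rewrite mulr_sumr; apply: ler_sum => j _; rewrite mxE mulrC.
apply: ler_wpM2r => //; apply: le_trans (row_le_inf2 _ _) VM.
Qed.

End S4.

Section S5.
Context {R : realType}.

Lemma head_bound n d (a a' : 'I_n -> 'I_n -> R) (V : 'M[R]_(n,d)) (M : R) :
  (2 <= n)%N -> (forall t, is_dist (a t)) -> (forall t, is_dist (a' t)) ->
  inf2norm V <= M ->
  0 <= ADbar a a' /\
  n%:R^-1 * \sum_t l2norm (Delta_ht a a' V t) <=
    M * Num.sqrt (8 * ln n%:R) * Num.sqrt (ADbar a a').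
Proof.
move=> n2 da da' VM.
have n0 : (0 < n)%N by apply: leq_trans n2.
have N0 : 0 < n%:R :> R by rewrite ltr0n.
have L0 : 0 < ln (n%:R : R) by apply: ln_gt0; rewrite ltr1n.
have M0 : 0 <= M.
  apply: le_trans (l2norm_ge0 (row (Ordinal n0) V)) _.
  exact: le_trans (row_le_inf2 _ _) VM.
set K := fun t => ln (n%:R : R) - entropy (a t).
set K' := fun t => ln (n%:R : R) - entropy (a' t).
have K0 t : 0 <= K t by have [] := pinsker_unif n0 (da t).
have K'0 t : 0 <= K' t by have [] := pinsker_unif n0 (da' t).
have hd (b : 'I_n -> 'I_n -> R) (db : forall t, is_dist (b t)) t mu : 0 < mu ->
    \sum_j `|b t j - n%:R^-1| <= (ln n%:R - entropy (b t)) / mu + mu / 2.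
  move=> mu0; have [_ H] := pinsker_unif n0 (db t).
  have l0 : 0 < mu / 3 by apply: divr_gt0.
  apply: le_trans (H _ l0) _; rewrite le_eqVlt; apply/orP; left; apply/eqP.
  by field; rewrite gt_eqF.
set SK := \sum_t K t; set SK' := \sum_t K' t.
have eAD : ADbar a a' = (n%:R * ln n%:R)^-1 * (SK + SK') / 2.
  by rewrite /ADbar /AD /SK /SK' /K /K' mulrDr.
have AD0 : 0 <= ADbar a a'.
  rewrite eAD; apply: divr_ge0 => //; apply: mulr_ge0.
    by rewrite invr_ge0 mulr_ge0 // ltW.
  by apply: addr_ge0; apply: sumr_ge0.
split => //.
have -> : 8 * ln n%:R = (4 * ln n%:R * 2) :> R by ring.
rewrite -mulrA -sqrtrM; last by rewrite !mulr_ge0 // ltW.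
have -> : 4 * ln n%:R * 2 * ADbar a a' = (4 * ln n%:R * ADbar a a') * 2 by ring.
apply: lam_bound => //; first by apply: mulr_ge0 => //; apply: mulr_ge0 => //; apply: ltW.
move=> mu mu0.
apply: (@le_trans _ _ (n%:R^-1 * \sum_t (M / mu * (K t + K' t) + M * mu))).
  apply: ler_wpM2l; first by rewrite invr_ge0 ltW.
  apply: ler_sum => t _.
  apply: le_trans (Delta_bound _ _ _ VM) _.
  have -> : M / mu * (K t + K' t) + M * mu = M * ((K t / mu + mu / 2) + (K' t / mu + mu / 2)).
    by field; rewrite gt_eqF.
  apply: ler_wpM2l => //.
  apply: (@le_trans _ _ (\sum_j (`|a t j - n%:R^-1| + `|a' t j - n%:R^-1|))).
    apply: ler_sum => j _.
    have -> : a t j - a' t j = (a t j - n%:R^-1) - (a' t j - n%:R^-1) by ring.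
    exact: ler_normB.
  rewrite big_split /=; apply: lerD; [exact: hd | exact: hd].
rewrite big_split /= -mulr_sumr sumr_const card_ord -/SK -/SK'.
have -> : \sum_t (K t + K' t) = SK + SK' by rewrite big_split.
rewrite eAD -mulr_natl le_eqVlt; apply/orP; left; apply/eqP.
field; rewrite ?mulr1 !gt_eqF //.
Qed.

End S5.

Section S6.
Context {R : realType}.

Lemma pruned_ge0 H (m : 'I_H -> bool) h : 0 <= pruned m h :> R.
Proof. by rewrite /pruned; case: (m h) => /=; rewrite ?subrr ?subr0. Qed.

Lemma pruned_le1 H (m : 'I_H -> bool) h : pruned m h <= 1 :> R.
Proof. by rewrite /pruned; case: (m h) => /=; rewrite ?subrr ?subr0. Qed.

Lemma dist_le1 n (p : 'I_n -> R) j : is_dist p -> p j <= 1.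
Proof.
move=> [p0 p1]; rewrite -p1 (bigD1 j) //= lerDl.
by apply: sumr_ge0 => i _.
Qed.

Lemma entropy_ge0 n (p : 'I_n -> R) : is_dist p -> 0 <= entropy p.
Proof.
move=> pd; have [p0 _] := pd; rewrite /entropy oppr_ge0.
apply: sumr_le0 => j _; rewrite mulr_ge0_le0 //.
exact: ln_le0 (dist_le1 j pd).
Qed.

Lemma AD_le1 n (a : 'I_n -> 'I_n -> R) : (2 <= n)%N -> (forall t, is_dist (a t)) ->
  AD a <= 1.
Proof.
move=> n2 da.
have N0 : 0 < n%:R :> R by rewrite ltr0n; apply: leq_trans n2.
have L0 : 0 < ln (n%:R : R) by apply: ln_gt0; rewrite ltr1n.
rewrite /AD mulrC ler_pdivrMr ?mulr_gt0 // mul1r.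
apply: (@le_trans _ _ (\sum_(t < n) ln (n%:R : R))).
  apply: ler_sum => t _; rewrite gerBl; exact: entropy_ge0.
by rewrite sumr_const card_ord mulr_natl.
Qed.

Lemma ADbar_le1 n (a a' : 'I_n -> 'I_n -> R) : (2 <= n)%N ->
  (forall t, is_dist (a t)) -> (forall t, is_dist (a' t)) -> ADbar a a' <= 1.
Proof.
move=> n2 da da'; rewrite /ADbar.
have := AD_le1 n2 da; have := AD_le1 n2 da'; lra.
Qed.

Lemma sum_sqrt_lam H (p A : 'I_H -> R) : (forall h, 0 <= p h) -> (forall h, 0 <= A h) ->
  forall l, 0 < l ->
  \sum_h p h * Num.sqrt (A h) <= ((\sum_h p h * A h) / l + (\sum_h p h) * l) / 2.
Proof.
move=> p0 A0 l l0.
rewrite !mulr_suml -big_split /= mulr_suml.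
apply: ler_sum => h _.
have := amgm_sqrt (A0 h) l0 => e.
have := ler_wpM2l (p0 h) e.
have -> : p h * ((A h / l + l) / 2) = (p h * A h / l + p h * l) / 2 by field; lra.
by [].
Qed.

Lemma conv (M L S Q : R) : 0 <= L -> 0 <= S -> 0 <= Q ->
  M * Num.sqrt (8 * L) * Num.sqrt (S * Q) = Num.sqrt 8 * M * Num.sqrt (Q * L) * Num.sqrt S.
Proof.
move=> L0 S0 Q0; rewrite !sqrtrM //; ring.
Qed.

Lemma pointwise (H n d : nat) (m : 'I_H -> bool) (M : R)
     (alpha alpha' : 'I_H -> 'I_n -> 'I_n -> R) (V : 'I_H -> 'M[R]_(n, d)) :
     (2 <= n)%N ->
     (forall h t, is_dist (alpha h t)) ->
     (forall h t, is_dist (alpha' h t)) ->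
     (forall h, inf2norm (V h) <= M) ->
     DeltaNorm m alpha alpha' V
       <= M * Num.sqrt (8 * ln n%:R) *
          \sum_(h < H) pruned m h * Num.sqrt (ADbar (alpha h) (alpha' h)).
Proof.
move=> n2 da da' VM.
rewrite /DeltaNorm exchange_big /= mulr_sumr mulr_sumr.
apply: ler_sum => h _.
have [_ hb] := head_bound n2 (da h) (da' h) (VM h).
rewrite -mulr_sumr mulrCA.
have -> : M * Num.sqrt (8 * ln n%:R) * (pruned m h * Num.sqrt (ADbar (alpha h) (alpha' h)))
  = pruned m h * (M * Num.sqrt (8 * ln n%:R) * Num.sqrt (ADbar (alpha h) (alpha' h))) by ring.
by apply: ler_wpM2l => //; exact: pruned_ge0.
Qed.

End S6.

Section S7.
Context {R : realType}.

Lemma bnd_int d (T : measurableType d) (P : probability T R) (f : T -> R) (B : R) :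
  measurable_fun setT f -> (forall x, `|f x| <= B) -> P.-integrable setT (EFin \o f).
Proof.
move=> mf fB; apply/integrableP; split; first exact/measurable_EFinP.
apply: (@le_lt_trans _ _ ((Num.max B 0)%:E * P setT)%E).
  apply: integral_le_bound => //.
  - exact/measurable_EFinP.
  - by rewrite lee_fin le_max lexx orbT.
  - apply: aeW => x _ /=; rewrite lee_fin; apply: le_trans (fB x) _.
    by rewrite le_max lexx.
by rewrite probability_setT mule1 ltry.
Qed.

Lemma Rint_sum d (T : measurableType d) (P : probability T R) (I : Type) (r : seq I)
  (f : I -> T -> R) (B : I -> R) :
  (forall i, measurable_fun setT (f i)) -> (forall i x, `|f i x| <= B i) ->
  Rintegral P setT (fun x => \sum_(i <- r) f i x) = \sum_(i <- r) Rintegral P setT (f i).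
Proof.
move=> mf fB; elim: r => [|i r IH].
  have -> : (fun x => \sum_(i <- [::]) f i x) = fun _ => 0.
    by apply/funext => x; rewrite big_nil.
  by rewrite Rintegral_cst // mul0r big_nil.
have -> : (fun x => \sum_(j <- i :: r) f j x) = fun x => f i x + \sum_(j <- r) f j x.
  by apply/funext => x; rewrite big_cons.
rewrite big_cons RintegralD //.
- by rewrite IH.
- exact: bnd_int (mf i) (fB i).
apply: (@bnd_int _ _ _ _ (\sum_(j <- r) B j)).
  exact: measurable_sum.
move=> x; apply: le_trans (ler_norm_sum _ _ _) _; apply: ler_sum => j _; exact: fB.
Qed.

End S7.

Unset Implicit Arguments.

Lemma M_ge0 (R : realType) (H n d : nat) (M : R) (V : 'I_H.+1 -> 'M[R]_(n, d)) :
  (2 <= n)%N -> (forall h, inf2norm (V h) <= M) -> 0 <= M.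
Proof.
move=> n2 VM; have n0 : (0 < n)%N by apply: leq_trans n2.
apply: le_trans (l2norm_ge0 (row (Ordinal n0) (V ord0))) _.
exact: le_trans (row_le_inf2 _ _) (VM ord0).
Qed.

Lemma part2 (R : realType) (H n : nat) (m : 'I_H -> bool) (M : R) (A : 'I_H -> R) :
  (2 <= n)%N -> 0 <= M -> (forall h, 0 <= A h) ->
  M * Num.sqrt (8 * ln n%:R) * \sum_(h < H) pruned m h * Num.sqrt (A h)
   <= Num.sqrt 8 * M * Num.sqrt ((\sum_(h < H) pruned m h) * ln n%:R) *
      Num.sqrt (\sum_(h < H) pruned m h * A h).
Proof.
move=> n2 M0 A0.
have L0 : 0 < ln (n%:R : R) by apply: ln_gt0; rewrite ltr1n.
have p0 : forall h, 0 <= pruned m h :> R by move=> h; exact: pruned_ge0.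
rewrite -conv; last 3 first.
- exact: ltW.
- by apply: sumr_ge0 => h _; apply: mulr_ge0; [exact: p0 | exact: A0].
- by apply: sumr_ge0 => h _; exact: p0.
apply: lam_bound.
- by rewrite mulr_ge0 // sqrtr_ge0.
- by apply: sumr_ge0 => h _; apply: mulr_ge0; [exact: p0 | exact: A0].
- by apply: sumr_ge0 => h _; exact: p0.
move=> l l0; apply: ler_wpM2l; first by rewrite mulr_ge0 // sqrtr_ge0.
exact: (sum_sqrt_lam p0 A0 l0).
Qed.

Theorem mainTheorem6 (R : realType) :
  (* pointwise bound, for a fixed input x *)
  (forall (H n d : nat) (m : 'I_H -> bool) (rho M : R)
     (alpha alpha' : 'I_H -> 'I_n -> 'I_n -> R) (V : 'I_H -> 'M[R]_(n, d)),
     (2 <= n)%N ->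
     \sum_(h < H) pruned m h = H%:R * rho ->
     (forall h t, is_dist (alpha h t)) ->
     (forall h t, is_dist (alpha' h t)) ->
     (forall h, inf2norm (V h) <= M) ->
     DeltaNorm m alpha alpha' V
       <= M * Num.sqrt (8 * ln n%:R) *
          \sum_(h < H) pruned m h * Num.sqrt (ADbar (alpha h) (alpha' h))
     /\
     M * Num.sqrt (8 * ln n%:R) *
          \sum_(h < H) pruned m h * Num.sqrt (ADbar (alpha h) (alpha' h))
       <= Num.sqrt 8 * M * Num.sqrt (H%:R * rho * ln n%:R) *
          Num.sqrt (\sum_(h < H) pruned m h * ADbar (alpha h) (alpha' h)))
  /\
  (* bound in expectation, all inputs of the same length n *)
  (forall (dsp : measure_display) (T : measurableType dsp) (P : probability T R)
     (H n d : nat) (m : 'I_H -> bool) (rho M : R)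
     (alpha alpha' : T -> 'I_H -> 'I_n -> 'I_n -> R) (V : T -> 'I_H -> 'M[R]_(n, d)),
     (2 <= n)%N ->
     \sum_(h < H) pruned m h = H%:R * rho ->
     (forall x h t, is_dist (alpha x h t)) ->
     (forall x h t, is_dist (alpha' x h t)) ->
     (forall x h, inf2norm (V x h) <= M) ->
     measurable_fun setT (fun x => DeltaNorm m (alpha x) (alpha' x) (V x)) ->
     (forall h, measurable_fun setT (fun x => ADbar (alpha x h) (alpha' x h))) ->
     Rintegral P setT (fun x => DeltaNorm m (alpha x) (alpha' x) (V x))
       <= Num.sqrt 8 * M * Num.sqrt (H%:R * rho * ln n%:R) *
          Num.sqrt (\sum_(h < H) pruned m h *
                      Rintegral P setT (fun x => ADbar (alpha x h) (alpha' x h)))).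
Proof.
split.
  move=> H n d m rho M alpha alpha' V n2 hs da da' VM.
  split; first exact: pointwise.
  case: H m alpha alpha' V hs da da' VM => [|H] m alpha alpha' V hs da da' VM.
    by rewrite !big_ord0 sqrtr0 !mulr0.
  rewrite -hs; apply: part2 => //; first exact: M_ge0 VM.
  by move=> h; have [] := head_bound n2 (da h) (da' h) (VM h).
move=> dsp T P H n d m rho M alpha alpha' V n2 hs da da' VM mDN mA.
case: H m alpha alpha' V hs da da' VM mDN mA => [|H] m alpha alpha' V hs da da' VM mDN mA.
  have -> : (fun x => DeltaNorm m (alpha x) (alpha' x) (V x)) = fun _ => 0.
    apply/funext => x; rewrite /DeltaNorm (eq_bigr (fun _ => 0)) ?big1 ?mulr0 //.
    by move=> t _; rewrite big_ord0.
  by rewrite Rintegral_cst // mul0r big_ord0 sqrtr0 mulr0.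
have [x0 _] : exists x : T, True.
  case: (pselect (exists x : T, True)) => // hn; exfalso.
  have := probability_setT P.
  have -> : [set: T] = set0 by apply/seteqP; split => x // _; apply: hn; exists x.
  by rewrite measure0 => /esym/eqP; rewrite eqe oner_eq0.
have M0 : 0 <= M by exact: (@M_ge0 R H n d M (V x0) n2 (VM x0)).
have L0 : 0 < ln (n%:R : R) by apply: ln_gt0; rewrite ltr1n.
have p0 : forall h, 0 <= pruned m h :> R by move=> h; exact: pruned_ge0.
have p1 : forall h, pruned m h <= 1 :> R by move=> h; exact: pruned_le1.
pose A := fun x h => ADbar (alpha x h) (alpha' x h).
have A0 x h : 0 <= A x h by have [] := head_bound n2 (da x h) (da' x h) (VM x h).
have A1 x h : A x h <= 1 by exact: ADbar_le1 n2 (da x h) (da' x h).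
pose Kc := M * Num.sqrt (8 * ln (n%:R : R)).
have Kc0 : 0 <= Kc by rewrite mulr_ge0 // sqrtr_ge0.
pose Q : R := \sum_(h < H.+1) pruned m h.
have Q0 : 0 <= Q by apply: sumr_ge0 => h _; exact: p0.
pose E : R := \sum_(h < H.+1) pruned m h * Rintegral P setT (fun x => A x h).
have E0 : 0 <= E.
  apply: sumr_ge0 => h _; apply: mulr_ge0; first exact: p0.
  by apply: Rintegral_ge0 => x _; exact: A0.
pose S := fun x : T => (\sum_(h < H.+1) pruned m h * A x h : R).
have Sb x : `|S x| <= H.+1%:R.
  rewrite ger0_norm; last by apply: sumr_ge0 => h _; apply: mulr_ge0.
  apply: (@le_trans _ _ (\sum_(h < H.+1) (1 : R))); last by rewrite sumr_const card_ord.
  apply: ler_sum => h _; rewrite -(mulr1 1); apply: ler_pM => //.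
have mS : measurable_fun setT S.
  apply: measurable_sum => h; apply: measurable_funM => //; exact: mA.
have pw x : DeltaNorm m (alpha x) (alpha' x) (V x) <=
    Kc * \sum_(h < H.+1) pruned m h * Num.sqrt (A x h).
  exact: pointwise.
have DN0 x : 0 <= DeltaNorm m (alpha x) (alpha' x) (V x).
  rewrite /DeltaNorm mulr_ge0 ?invr_ge0 //; apply: sumr_ge0 => t _.
  by apply: sumr_ge0 => h _; apply: mulr_ge0 => //; exact: l2norm_ge0.
have iDN : P.-integrable setT (EFin \o (fun x => DeltaNorm m (alpha x) (alpha' x) (V x))).
  apply: (@bnd_int _ _ _ _ _ (Kc * H.+1%:R)) => // x.
  rewrite ger0_norm //; apply: le_trans (pw x) _; apply: ler_wpM2l => //.
  apply: (@le_trans _ _ (\sum_(h < H.+1) (1 : R))); last by rewrite sumr_const card_ord.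
  apply: ler_sum => h _; rewrite -(mulr1 1).
  apply: ler_pM; [exact: p0 | exact: sqrtr_ge0 | exact: p1 | by rewrite -sqrtr1 ler_sqrt].
rewrite -hs -conv //; last exact: ltW.
apply: lam_bound => // l l0.
set c1 := Kc / (2 * l); set c2 := Kc * Q * l / 2.
have iS1 : P.-integrable setT (EFin \o (fun x => c1 * S x)).
  apply: (@bnd_int _ _ _ _ _ (`|c1| * H.+1%:R)).
    by apply: measurable_funM => //; first [exact: mS | exact: mA | exact: measurable_cst].
  by move=> x; rewrite normrM; apply: ler_wpM2l.
have iC : P.-integrable setT (EFin \o (fun _ : T => c2)).
  by apply: (@bnd_int _ _ _ _ _ (`|c2|)) => //; exact: measurable_cst.
apply: (@le_trans _ _ (Rintegral P setT (fun x => c1 * S x + c2))).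
  apply: le_Rintegral => //.
    apply: (@bnd_int _ _ _ _ _ (`|c1| * H.+1%:R + `|c2|)).
      by apply: measurable_funD => //; apply: measurable_funM => //; first [exact: mS | exact: mA | exact: measurable_cst].
    by move=> x; apply: le_trans (ler_normD _ _) _; rewrite normrM lerD2r ler_wpM2l.
  move=> x _; apply: le_trans (pw x) _.
  apply: le_trans (ler_wpM2l Kc0 (sum_sqrt_lam p0 (A0 x) l0)) _.
  rewrite le_eqVlt; apply/orP; left; apply/eqP.
  rewrite /c1 /c2 /S /Q; field; rewrite gt_eqF //.
rewrite RintegralD // RintegralZl //; last first.
  by apply: (@bnd_int _ _ _ _ _ (H.+1%:R)).
have P1 : fine (P [set: T]) = 1 by rewrite probability_setT.
rewrite Rintegral_cst // P1 mulr1.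
rewrite (@Rint_sum _ _ _ _ _ _ (fun h x => pruned m h * A x h) (fun _ => 1)); last 2 first.
- by move=> h; apply: measurable_funM => //; first [exact: mS | exact: mA | exact: measurable_cst].
- move=> h x; rewrite normrM ger0_norm // ger0_norm //; rewrite -(mulr1 1); apply: ler_pM => //.
have -> : \sum_(h < H.+1) Rintegral P setT (fun x => pruned m h * A x h) = E.
  apply: eq_bigr => h _; rewrite RintegralZl //.
  apply: (@bnd_int _ _ _ _ _ 1); first exact: mA.
  by move=> x; rewrite ger0_norm.
rewrite le_eqVlt; apply/orP; left; apply/eqP.
rewrite /c1 /c2 /E /Q /Kc /A; field; rewrite gt_eqF //.
Qed.
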